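(* For every $N\in\mathbb{N}$, setting $n=2^N$, and every $\epsilon>0$, there exists a qubit state $\rho$ (depending on $n$ and $\epsilon$) such that $$M^{(1)}(\rho)<\frac1n\quad\text{and}\quad \frac{M^{(1)}(\sigma_{(m)})}{M^{(1)}(\rho)}>2^{-\epsilon}\sqrt{n}\quad\text{for all } m\ge\log_2 n,$$ where $\sigma_{(m)}$ is the output of the $m$th step of the concatenation protocol applied to $\rho$.
   Context: Qubit basis $\{|0\rangle,|1\rangle\}$ is the eigenbasis of $L=|1\rangle\langle1|$; $M^{(1)}(\sigma):=|\langle0|\sigma|1\rangle|$ (the trace norm of the first mode $|1\rangle\langle1|\sigma|0\rangle\langle0|$). Concatenation protocol: $\sigma_{(0)}=\rho$ and $\sigma_{(m+1)}=\mathrm{tr}_B\big[U_m(\sigma_{(m)}\otimes\sigma_{(m)})U_m^\dagger\big]$, where, with $p^{(m)}_{00}=\langle0|\sigma_{(m)}|0\rangle$, $U_m$ acts as the identity on $|00\rangle,|11\rangle$ and on $\mathrm{span}\{|01\rangle,|10\rangle\}$ as $|01\rangle\mapsto\cos\theta_m|01\rangle+\sin\theta_m|10\rangle$, $|10\rangle\mapsto-\sin\theta_m|01\rangle+\cos\theta_m|10\rangle$ with $\cos\theta_m=1/\sqrt{1+(2p^{(m)}_{00}-1)^2}$, $\sin\theta_m=(2p^{(m)}_{00}-1)/\sqrt{1+(2p^{(m)}_{00}-1)^2}$. Step $m$ consumes $2^m$ copies of $\rho$. *)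

(* Defs.v *)
From HB Require Import structures.
From mathcomp Require Import all_boot all_order all_algebra.
From mathcomp Require Import complex.
From mathcomp Require Import Rstruct.
From Stdlib Require Import Rdefinitions Rpower.
Set Implicit Arguments. Unset Strict Implicit. Unset Printing Implicit Defensive.
Import Order.TTheory GRing.Theory Num.Theory.
Local Open Scope ring_scope.

Notation C := (Rdefinitions.R[i]).

Definition k0 : 'I_2 := ord0.
Definition k1 : 'I_2 := ord_max.

Definition adjmx m n (A : 'M[C]_(m, n)) : 'M[C]_(n, m) := (map_mx Num.conj A)^T.

Definition psd (s : 'M[C]_2) : Prop :=
  forall v : 'cV[C]_2, 0 <= (adjmx v *m s *m v) 0 0.
Definition qubit_state (s : 'M[C]_2) : Prop := psd s /\ \tr s = 1.

(* two-qubit operators, indexed by pairs (a,b) <-> |a b>, a = system A, b = system B *)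
Definition op2 := ('I_2 * 'I_2)%type -> ('I_2 * 'I_2)%type -> C.
Definition kron (s t : 'M[C]_2) : op2 := fun i j => s i.1 j.1 * t i.2 j.2.
Definition mul2 (A B : op2) : op2 := fun i j => \sum_(k : 'I_2 * 'I_2) A i k * B k j.
Definition adj2 (A : op2) : op2 := fun i j => Num.conj (A j i).
Definition ptrB (X : op2) : 'M[C]_2 := \matrix_(a, a') \sum_(b : 'I_2) X (a, b) (a', b).

(* the unitary U: identity on |00>,|11>; on span{|01>,|10>}:
   |01> -> c|01> + s|10>,  |10> -> -s|01> + c|10>   (entry U i j = <i|U|j>) *)
Definition Uop (c s : Rdefinitions.R) : op2 := fun i j =>
  if (i == (k0, k0)) && (j == (k0, k0)) then 1
  else if (i == (k1, k1)) && (j == (k1, k1)) then 1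
  else if (i == (k0, k1)) && (j == (k0, k1)) then (c%:C)%C
  else if (i == (k1, k0)) && (j == (k0, k1)) then (s%:C)%C
  else if (i == (k0, k1)) && (j == (k1, k0)) then ((- s)%:C)%C
  else if (i == (k1, k0)) && (j == (k1, k0)) then (c%:C)%C
  else 0.

Definition protocol_step (sigma : 'M[C]_2) : 'M[C]_2 :=
  let p00 := complex.Re (sigma k0 k0) in
  let d := 2 * p00 - 1 in
  let r := Num.sqrt (1 + d ^+ 2) in
  let U := Uop (1 / r) (d / r) in
  ptrB (mul2 (mul2 U (kron sigma sigma)) (adj2 U)).

Definition sigma_m (m : nat) (rho : 'M[C]_2) : 'M[C]_2 := iter m protocol_step rho.

Definition M1 (sigma : 'M[C]_2) : Rdefinitions.R := complex.Re `|sigma k0 k1|.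

(* Main.v *)
Require Import Defs.
From HB Require Import structures.
From mathcomp Require Import all_boot all_order all_algebra.
From mathcomp Require Import complex Rstruct.
From mathcomp Require Import ring lra.
From Stdlib Require Import Rdefinitions Rpower.
From Stdlib Require Lra RIneq.
Import Order.TTheory GRing.Theory Num.Theory.
Local Open Scope ring_scope.
Set Warnings "-notation-overridden".

Definition mk (p c : R) : 'M[C]_2 :=
  \matrix_(i, j) (if i == k0 then (if j == k0 then p else c)
                  else (if j == k0 then c else 1 - p))%:C%C.

Lemma sum2 (F : 'I_2 -> C) : \sum_(b : 'I_2) F b = F k0 + F k1.
Proof.
rewrite big_ord_recl big_ord_recl big_ord0 addr0.
by congr (_ + F _); apply/val_inj.
Qed.

Lemma sumP (F : 'I_2 * 'I_2 -> C) :
  \sum_(k : 'I_2 * 'I_2) F k = F (k0,k0) + F (k0,k1) + F (k1,k0) + F (k1,k1).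
Proof.
transitivity (\sum_(k : 'I_2 * 'I_2) F (k.1, k.2)); first by apply: eq_bigr => -[].
rewrite -(pair_bigA _ (fun i j => F (i, j))) /= sum2 !sum2.
by rewrite !addrA.
Qed.

Lemma mk00 p c : mk p c k0 k0 = p%:C%C. Proof. by rewrite mxE. Qed.
Lemma mk01 p c : mk p c k0 k1 = c%:C%C. Proof. by rewrite mxE. Qed.
Lemma mk10 p c : mk p c k1 k0 = c%:C%C. Proof. by rewrite mxE. Qed.
Lemma mk11 p c : mk p c k1 k1 = (1 - p)%:C%C. Proof. by rewrite mxE. Qed.


Lemma k01 : (k0 == k1) = false. Proof. by []. Qed.
Lemma k10 : (k1 == k0) = false. Proof. by []. Qed.

Definition stepM (a s : R) (X : 'M[C]_2) :=
  ptrB (mul2 (mul2 (Uop a s) (kron X X)) (adj2 (Uop a s))).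

Lemma conjR (x : R) : Num.conj (x%:C%C : C) = x%:C%C.
Proof. exact: conjc_real. Qed.

Ltac expand := rewrite /stepM /ptrB mxE sum2 /mul2 !sumP /adj2 /kron /Uop /=
   ?mk00 ?mk01 ?mk10 ?mk11 ?conjR ?rmorph0 ?rmorph1 ?conjR;
   rewrite ?(rmorphD, rmorphB, rmorphM, rmorphN, rmorph1) /=; ring.

Lemma st00 p c a s : stepM a s (mk p c) k0 k0 =
  (p * p + (a * a * (p * (1 - p)) - a * s * (c * c) - s * a * (c * c) + s * s * (p * (1 - p))))%:C%C.
Proof.
expand.
Qed.
Lemma st01 p c a s : stepM a s (mk p c) k0 k1 =
  (c * (p * (a + s) + (1 - p) * (a - s)))%:C%C.
Proof. expand. Qed.
Lemma st10 p c a s : stepM a s (mk p c) k1 k0 =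
  (c * (p * (a + s) + (1 - p) * (a - s)))%:C%C.
Proof. expand. Qed.
Lemma st11 p c a s : stepM a s (mk p c) k1 k1 =
  ((1 - p) * (1 - p) + (a * a + s * s) * (p * (1 - p)) + 2 * a * s * (c * c))%:C%C.
Proof. expand. Qed.

Definition nxt (pc : R * R) : R * R :=
  let d := 2 * pc.1 - 1 in
  (pc.1 - 2 * d * pc.2 ^+ 2 / (1 + d ^+ 2), pc.2 * Num.sqrt (1 + d ^+ 2)).

Lemma ord2 (i : 'I_2) : i = k0 \/ i = k1.
Proof.
case: i => [[|[|//]] Hi]; [left|right]; exact/val_inj.
Qed.

Lemma step_mk p c : protocol_step (mk p c) = mk (nxt (p, c)).1 (nxt (p, c)).2.
Proof.
rewrite /protocol_step mk00 /=.
set d := 2 * p - 1.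
set r := Num.sqrt (1 + d ^+ 2).
have hd : 0 < 1 + d ^+ 2 by rewrite ltr_pwDl // sqr_ge0.
have hr : r ^+ 2 = 1 + d ^+ 2 by rewrite sqr_sqrtr // ltW.
have r0 : r != 0 by rewrite sqrtr_eq0 -ltNge.
have rd : r ^+ 2 != 0 by rewrite hr gt_eqF.
change (stepM (1 / r) (d / r) (mk p c) = mk (nxt (p, c)).1 (nxt (p, c)).2).
apply/matrixP => i j.
have d0 : 1 + d ^+ 2 != 0 by rewrite gt_eqF.
have hrr x y : x / r * (y / r) = x * y / (1 + d ^+ 2).
  rewrite -hr; field; exact: r0.
have E1 : c * (p * (1 / r + d / r) + (1 - p) * (1 / r - d / r)) = c * r.
  have -> : c * r = c * r ^+ 2 / r by rewrite expr2 mulrA mulfK.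
  rewrite hr /d; field; exact: r0.
have E0 : p * p + (1 / r * (1 / r) * (p * (1 - p)) - 1 / r * (d / r) * (c * c) -
     d / r * (1 / r) * (c * c) + d / r * (d / r) * (p * (1 - p))) =
     p - 2 * d * c ^+ 2 / (1 + d ^+ 2).
  rewrite !hrr; field; exact: d0.
have E3 : (1 - p) * (1 - p) + (1 / r * (1 / r) + d / r * (d / r)) * (p * (1 - p)) +
    2 * (1 / r) * (d / r) * (c * c) = 1 - (p - 2 * d * c ^+ 2 / (1 + d ^+ 2)).
  rewrite -(mulrA 2) !hrr; field; exact: d0.
case: (ord2 i) => ->; case: (ord2 j) => ->.
- by rewrite st00 mk00 E0.
- by rewrite st01 mk01 E1.
- by rewrite st10 mk10 E1.
- by rewrite st11 mk11 E3.
Qed.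

Lemma iter_mk m p c : sigma_m m (mk p c) = mk (iter m nxt (p, c)).1 (iter m nxt (p, c)).2.
Proof.
elim: m => [|m IH] //=.
rewrite /sigma_m /= -/(sigma_m m _) IH step_mk.
by case: (iter m nxt (p, c)).
Qed.

Lemma conjE (z : C) : Num.conj z = conjc z. Proof. by []. Qed.

Lemma psd_mk p c : 0 <= p -> p <= 1 -> c ^+ 2 <= p * (1 - p) -> psd (mk p c).
Proof.
move=> p0 p1 hc v.
rewrite /adjmx mxE sum2 !mxE !sum2 !mxE /=.

case: (v k0 0) => a b; case: (v k1 0) => e f.
rewrite -!complexr0.
simpc.
apply/andP; split; first by apply/eqP; ring.
set Q := (X in 0 <= X).
have -> : Q = p * (a ^+ 2 + b ^+ 2) + 2 * c * (a * e + b * f) + (1 - p) * (e ^+ 2 + f ^+ 2)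
  by rewrite /Q; ring.
have [pe|pp] := eqVneq p 0.
  rewrite pe.
  have c0 : c = 0.
    have : c ^+ 2 <= 0 by move: hc; rewrite pe mul0r.
    by move=> h; apply/eqP; rewrite -sqrf_eq0 eq_le h sqr_ge0.
  rewrite c0; have := sqr_ge0 e; have := sqr_ge0 f; lra.
have pg : 0 < p by rewrite lt_neqAle eq_sym pp.
rewrite -(pmulr_rge0 _ pg).
have := sqr_ge0 (p * a + c * e); have := sqr_ge0 (p * b + c * f).
have := sqr_ge0 e; have := sqr_ge0 f.
nra.
Qed.

Lemma tr_mk p c : \tr (mk p c) = 1.
Proof.
rewrite /mxtrace sum2 mk00 mk11 -rmorphD addrC subrK.
by rewrite rmorph1.
Qed.

Lemma M1_mk p c : M1 (mk p c) = `|c|.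
Proof.
rewrite /M1 mk01 normc_def /=.
by rewrite expr0n /= addr0 sqrtr_sqr.
Qed.

Lemma Dpos (d : R) : 0 < 1 + d ^+ 2.
Proof. by rewrite ltr_pwDl // sqr_ge0. Qed.

Lemma nxt_d p c : 2 * (nxt (p, c)).1 - 1 =
  (2 * p - 1) - 4 * (2 * p - 1) * c ^+ 2 / (1 + (2 * p - 1) ^+ 2).
Proof. rewrite /nxt /=. have := Dpos (2 * p - 1). move=> H. field. by rewrite gt_eqF. Qed.

Lemma nxt_c2 p c : (nxt (p, c)).2 ^+ 2 = c ^+ 2 * (1 + (2 * p - 1) ^+ 2).
Proof. by rewrite /nxt /= exprMn sqr_sqrtr // ltW // Dpos. Qed.

Lemma nxt_c p c : 0 <= c -> 0 <= (nxt (p, c)).2 /\ c <= (nxt (p, c)).2.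
Proof.
move=> c0; rewrite /nxt /=; split; first by rewrite mulr_ge0 // sqrtr_ge0.
rewrite ler_peMr // -[X in X <= _]sqrtr1 ler_sqrt ?ler_wpDr ?sqr_ge0 //.
Qed.

Lemma step_bounds (d c t : R) :
  0 <= t -> t <= 1 -> 1 - t <= d -> d <= 1 -> 0 <= c ->
  let d' := d - 4 * d * c ^+ 2 / (1 + d ^+ 2) in
  let k' := c ^+ 2 * (1 + d ^+ 2) in
  [/\ d' <= 1, d - 4 * c ^+ 2 <= d', k' <= 2 * c ^+ 2 & (2 - 2 * t) * c ^+ 2 <= k'].
Proof.
move=> t0 t1 td d1 c0 d' k'.
have D := Dpos d.
have d0 : 0 <= d by lra.
have h1 : 0 <= 4 * d * c ^+ 2 / (1 + d ^+ 2).
  apply: divr_ge0; last exact: ltW.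
  have : 0 <= c ^+ 2 by rewrite sqr_ge0.
  nra.
have h2 : 4 * d * c ^+ 2 / (1 + d ^+ 2) <= 4 * c ^+ 2.
  rewrite ler_pdivrMr //.
  have : 0 <= c ^+ 2 by rewrite sqr_ge0.
  nra.
have dd : d ^+ 2 <= 1 by nra.
have dd2 : 1 - 2 * t <= d ^+ 2 by nra.
have cc : 0 <= c ^+ 2 by rewrite sqr_ge0.
split; rewrite /d' /k'; [lra|lra|nra|nra].
Qed.

Lemma pow2_le (j N : nat) : leq j N -> (2 : R) ^+ j <= 2 ^+ N.
Proof. move=> h. rewrite -(natrX _ 2 j) -(natrX _ 2 N) ler_nat leq_pexp2l //. Qed.

Lemma pow2_ge0 (j : nat) : (0 : R) <= 2 ^+ j.
Proof. by rewrite exprn_ge0. Qed.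

Lemma inv (p0 c0 t : R) (N : nat) :
  0 <= t -> t <= 1 -> N%:R * t <= 1 -> 0 <= c0 -> 2 * p0 - 1 <= 1 ->
  1 - t <= (2 * p0 - 1) - 4 * c0 ^+ 2 * 2 ^+ N ->
  forall j, leq j N ->
  let P := iter j nxt (p0, c0) in
  [/\ 0 <= P.2, P.2 ^+ 2 <= c0 ^+ 2 * 2 ^+ j,
      (2 * p0 - 1) - 4 * c0 ^+ 2 * (2 ^+ j - 1) <= 2 * P.1 - 1,
      2 * P.1 - 1 <= 1 &
      c0 ^+ 2 * 2 ^+ j * (1 - j%:R * t) <= P.2 ^+ 2].
Proof.
move=> t0 t1 Nt c0p d01 hN.
have cc0 : 0 <= c0 ^+ 2 by rewrite sqr_ge0.
elim=> [|j IH] hj.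
  rewrite /= expr0 mulr1 subrr mulr0 subr0 mul0r subr0 mulr1; split => //; lra.
have hj' : leq j N by exact: ltnW.
have [IH1 IH2 IH3 IH4 IH5] := IH hj'.
rewrite iterS.
move: IH1 IH2 IH3 IH4 IH5.
case: (iter j nxt (p0, c0)) => p c /= IH1 IH2 IH3 IH4 IH5.
have e2 := pow2_le _ _ hj'.
have e0 := pow2_ge0 j.
have A : 0 <= c0 ^+ 2 * 2 ^+ j by rewrite mulr_ge0.
have B : c0 ^+ 2 * 2 ^+ j <= c0 ^+ 2 * 2 ^+ N by rewrite ler_wpM2l.
have dj : 1 - t <= 2 * p - 1 by lra.
have [S1 S2 S3 S4] := step_bounds _ _ _ t0 t1 dj IH4 IH1.
have [C1 _] := nxt_c p c IH1.
have jt : j%:R * t <= 1.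
  have : (j%:R : R) <= N%:R by rewrite ler_nat.
  nra.
have jt0 : 0 <= j%:R * t by rewrite mulr_ge0.
have e3 : (2:R) ^+ j.+1 = 2 * 2 ^+ j by rewrite exprS.
rewrite nxt_d nxt_c2 e3.
split => //.
- lra.
- lra.
- have F : (2 - 2 * t) * (c0 ^+ 2 * 2 ^+ j * (1 - j%:R * t)) <= (2 - 2 * t) * c ^+ 2.
    by rewrite ler_wpM2l //; lra.
  have G : 0 <= c0 ^+ 2 * 2 ^+ j * (j%:R * t * t).
    by rewrite mulr_ge0 // mulr_ge0.
  rewrite -natr1.
  nra.
Qed.

Lemma iter_ge0 (pc : R * R) : 0 <= pc.2 -> forall m, 0 <= (iter m nxt pc).2.
Proof.
move=> h; elim=> [|m IH] //=.
move: IH; case: (iter m nxt pc) => p c IH.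
by have [] := nxt_c p c IH.
Qed.

Lemma iter_mono (pc : R * R) : 0 <= pc.2 -> forall N m, leq N m ->
  (iter N nxt pc).2 <= (iter m nxt pc).2.
Proof.
move=> h N m hm; rewrite -(subnK hm).
elim: (subn m N) => [|k IH] //=.
apply: le_trans IH _.
have := iter_ge0 pc h (k + N).
case: (iter (k + N) nxt pc) => p c IH.
by have [] := nxt_c p c IH.
Qed.

Theorem mainTheorem4 :
  forall (N : nat) (eps : Rdefinitions.R), 0 < eps ->
  exists rho : 'M[C]_2,
    qubit_state rho /\
    M1 rho < 1 / (expn 2 N)%:R /\
    (forall m : nat, leq N m ->
       M1 (sigma_m m rho) / M1 rho > Rpower 2 (- eps) * Num.sqrt ((expn 2 N)%:R)).
Proof.
move=> N eps he.
set th := Rpower 2 (- eps).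
have th0 : 0 < th by apply/RltP; rewrite /th /Rpower; apply: Exp_prop.exp_pos.
have th1 : th < 1.
  apply/RltP; apply: (RIneq.Rlt_le_trans _ (Rpower 2 0)).
    apply: Rpower_lt; first by Lra.lra.
    by apply/RltP; rewrite oppr_lt0.
  rewrite Rpower_O; first exact: RIneq.Rle_refl.
  by Lra.lra.
set X : R := (expn 2 N)%:R.
have hX : 1 <= X by rewrite /X ler1n expn_gt0.
have X2 : X = 2 ^+ N by rewrite /X natrX.
have X0 : 0 < X by lra.
set t := (1 - th ^+ 2) / (N%:R + 1).
have hN0 : 0 <= N%:R :> R by rewrite ler0n.
have N1 : 0 < N%:R + 1 :> R by lra.
have thsq : th ^+ 2 < 1 by rewrite expr2; nra.
have thsq0 : 0 <= th ^+ 2 by rewrite sqr_ge0.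
have tN : t * (N%:R + 1) = 1 - th ^+ 2 by rewrite /t divfK // gt_eqF.
have t0 : 0 < t by rewrite /t divr_gt0 // subr_gt0.
have t1 : t <= 1 by nra.
have Nt : N%:R * t < 1 - th ^+ 2 by nra.
set p0 := 1 - t / 4.
set c0 := t / (4 * X).
have c0p : 0 < c0 by rewrite /c0 divr_gt0 // mulr_gt0.
have c0le : c0 <= t / 4.
  rewrite /c0 ler_pdivrMr ?mulr_gt0 //.
  have -> : t / 4 * (4 * X) = t * X by field.
  nra.
have key : 4 * c0 ^+ 2 * X <= t / 2.
  have -> : 4 * c0 ^+ 2 * X = t * t / (4 * X) by rewrite /c0; field; rewrite gt_eqF.
  rewrite ler_pdivrMr ?mulr_gt0 //.
  nra.
exists (mk p0 c0); split; [split|split].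
- apply: psd_mk; rewrite /p0; try lra.
  have : c0 ^+ 2 <= (t / 4) ^+ 2 by rewrite expr2 [X in _ <= X]expr2; nra.
  nra.
- exact: tr_mk.
- rewrite M1_mk ger0_norm ?ltW // /c0 ltr_pdivrMr ?mulr_gt0 //.
  have -> : 1 / X * (4 * X) = 4 by field; rewrite gt_eqF.
  lra.
move=> m hm.
rewrite iter_mk !M1_mk.
have cge := iter_ge0 (p0, c0) (ltW c0p) m.
rewrite (ger0_norm cge) (ger0_norm (ltW c0p)).
rewrite ltr_pdivlMr //.
have NT1 : N%:R * t <= 1 by lra.
have D1 : 2 * p0 - 1 <= 1 by rewrite /p0; lra.
have D2 : 1 - t <= (2 * p0 - 1) - 4 * c0 ^+ 2 * 2 ^+ N by rewrite -X2 /p0; lra.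
have [I1 _ _ _ I5] := inv p0 c0 t N (ltW t0) t1 NT1 (ltW c0p) D1 D2 N (leqnn N).
have mono := iter_mono (p0, c0) (ltW c0p) N m hm.
move: I1 I5 mono cge.
set cN := (iter N nxt (p0, c0)).2.
set cm := (iter m nxt (p0, c0)).2.
rewrite -X2 => I1 I5 mono cge.
have sX : Num.sqrt X ^+ 2 = X by rewrite sqr_sqrtr // ltW.
have sX0 : 0 <= Num.sqrt X by rewrite sqrtr_ge0.
have cX : 0 < c0 ^+ 2 * X by rewrite mulr_gt0 // exprn_gt0.
have E : (th * Num.sqrt X * c0) ^+ 2 = th ^+ 2 * (c0 ^+ 2 * X).
  by rewrite !exprMn sX; ring.
have F : th ^+ 2 * (c0 ^+ 2 * X) < c0 ^+ 2 * X * (1 - N%:R * t).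
  rewrite mulrC ltr_pM2l //; lra.
have G : (th * Num.sqrt X * c0) ^+ 2 < cN ^+ 2 by rewrite E; lra.
have H0 : 0 <= th * Num.sqrt X * c0.
  by apply: mulr_ge0; [apply: mulr_ge0; [exact: ltW|exact: sX0] | exact: ltW].
nra.
Qed.
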